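(* Let $U:[1,\infty)\to\mathbb R_+$ be increasing to infinity, continuously differentiable, and regularly varying with index $\gamma\ge0$. For $t$ with $U(t)>1$, let $m(t)$ be the $y\ge 1$ such that $U(t/y)=y$. Then: (i) $m$ is well-defined and increasing; (ii) $m$ is continuously differentiable; (iii) $m(t)\to\infty$ and $t/m(t)\to\infty$ as $t\to\infty$; (iv) $m$ is regularly varying with index $\gamma/(\gamma+1)$. Moreover, if $U(t)=t^\gamma L(t)$ with $L$ slowly varying, then, letting $L_1(t)=L(t^{1/(1+\gamma)})$ and $L_1^*$ be a De Bruijn conjugate of $L_1$, $$m(t)\sim t^{\gamma/(\gamma+1)}\,L_1^*(t)^{-1/(1+\gamma)}\quad\text{as } t\to\infty.$$
   Context: A measurable $h:\mathbb R_+\to\mathbb R_+$ is regularly varying with index $\alpha$ if $h(tx)/h(t)\to x^\alpha$ as $t\to\infty$ for every $x>0$; slowly varying means index $0$. For $L$ slowly varying, a De Bruijn conjugate is a slowly varying function $L^*$ with $L^*(x)L(xL^*(x))\to1$ and $L(x)L^*(xL(x))\to1$ as $x\to\infty$ (it exists and is unique up to asymptotic equivalence). $a\sim b$ means $a/b\to1$. *)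

(* Defs.v *)
From Stdlib Require Import Reals.
From Coquelicot Require Import Coquelicot.
Open Scope R_scope.

Definition reg_var (h : R -> R) (a : R) : Prop :=
  forall x, 0 < x -> is_lim (fun t => h (t * x) / h t) p_infty (Finite (Rpower x a)).

Definition slow_var (h : R -> R) : Prop := reg_var h 0.

Definition debruijn_conj (L Ls : R -> R) : Prop :=
  (forall x, 0 < x -> 0 < Ls x) /\ slow_var Ls /\
  is_lim (fun x => Ls x * L (x * Ls x)) p_infty (Finite 1) /\
  is_lim (fun x => L x * Ls (x * L x)) p_infty (Finite 1).

Definition C1_on (P : R -> Prop) (f f' : R -> R) : Prop :=
  forall t, P t ->
    (forall eps, 0 < eps -> exists delta, 0 < delta /\
       forall s, P s -> s <> t -> Rabs (s - t) < delta ->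
         Rabs ((f s - f t) / (s - t) - f' t) < eps) /\
    (forall eps, 0 < eps -> exists delta, 0 < delta /\
       forall s, P s -> Rabs (s - t) < delta -> Rabs (f' s - f' t) < eps).

Definition m_dom (U : R -> R) (t : R) : Prop := 1 <= t /\ 1 < U t /\ U 1 <= t.

(* Main.v *)
Require Import Defs.
From Stdlib Require Import Reals Lra Classical ClassicalEpsilon.
From Coquelicot Require Import Coquelicot.
Open Scope R_scope.

Lemma eps_to_lim (P : R -> Prop) t g l :
  (forall eps, 0 < eps -> exists d, 0 < d /\ forall s, P s -> Rabs (s - t) < d -> Rabs (g s - l) < eps) ->
  filterlim g (within P (locally t)) (locally l).
Proof.
  intros H Q [eps HQ]. unfold filtermap, within.
  destruct (H eps (cond_pos eps)) as [d [Hd H2]].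
  exists (mkposreal d Hd). intros s Hs Ps. apply HQ. apply H2; auto.
Qed.

Lemma lim_to_eps (P : R -> Prop) t g l :
  filterlim g (within P (locally t)) (locally l) ->
  (forall eps, 0 < eps -> exists d, 0 < d /\ forall s, P s -> Rabs (s - t) < d -> Rabs (g s - l) < eps).
Proof.
  intros H eps Heps.
  destruct (H (fun y => Rabs (y - l) < eps)) as [d Hd].
  { exists (mkposreal eps Heps). intros y Hy. exact Hy. }
  exists d. split. apply cond_pos. intros s Ps Hs. apply Hd; auto.
Qed.

Lemma lim_mult {T} (F : (T -> Prop) -> Prop) {FF : Filter F} f g a b :
  filterlim f F (locally a) -> filterlim g F (locally b) ->
  filterlim (fun x => f x * g x) F (locally (a * b)).
Proof.
  intros Hf Hg.
  apply (filterlim_comp_2 f g Rmult Hf Hg).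
  apply (filterlim_Rbar_mult (Finite a) (Finite b) (Finite (a*b))).
  reflexivity.
Qed.

Lemma lim_plus {T} (F : (T -> Prop) -> Prop) {FF : Filter F} f g a b :
  filterlim f F (locally a) -> filterlim g F (locally b) ->
  filterlim (fun x => f x + g x) F (locally (a + b)).
Proof.
  intros Hf Hg.
  apply (filterlim_comp_2 f g Rplus Hf Hg).
  apply (filterlim_Rbar_plus (Finite a) (Finite b) (Finite (a+b))).
  reflexivity.
Qed.

Lemma lim_inv {T} (F : (T -> Prop) -> Prop) {FF : Filter F} f a :
  a <> 0 -> filterlim f F (locally a) ->
  filterlim (fun x => / f x) F (locally (/ a)).
Proof.
  intros Ha Hf.
  apply (filterlim_comp _ _ _ f Rinv F (locally a) (locally (/a)) Hf).
  apply (filterlim_Rbar_inv (Finite a)). intro E; apply Ha; injection E; auto.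
Qed.

Lemma lim_div {T} (F : (T -> Prop) -> Prop) {FF : Filter F} f g a b :
  b <> 0 -> filterlim f F (locally a) -> filterlim g F (locally b) ->
  filterlim (fun x => f x / g x) F (locally (a / b)).
Proof.
  intros Hb Hf Hg. unfold Rdiv. apply lim_mult; auto. apply lim_inv; auto.
Qed.

Lemma Rmax_lip s y : Rabs (Rmax 1 s - Rmax 1 y) <= Rabs (s - y).
Proof. unfold Rmax; destruct (Rle_dec 1 s); destruct (Rle_dec 1 y); split_Rabs; lra. Qed.

Lemma choice_ex (P : R -> Prop) : exists x, (exists y, P y) -> P x.
Proof.
  destruct (classic (exists y, P y)) as [[y Hy]|H].
  - exists y; auto.
  - exists 0; intro; contradiction.
Qed.

Definition choose (P : R -> Prop) : R :=
  proj1_sig (constructive_indefinite_description _ (choice_ex P)).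

Lemma choose_spec P : (exists y, P y) -> P (choose P).
Proof. unfold choose. destruct constructive_indefinite_description; simpl; auto. Qed.

Record hyp (U U' : R -> R) : Prop := {
  Hpos_ : forall t, 1 <= t -> 0 <= U t;
  Hinc_ : forall s t, 1 <= s -> s < t -> U s < U t;
  Hinf_ : is_lim U p_infty p_infty;
  HC1_ : C1_on (fun t => 1 <= t) U U' }.


Lemma U_le U U' (H : hyp U U') s t : 1 <= s -> s <= t -> U s <= U t.
Proof.
  intros Hs Hst. destruct (Req_dec s t) as [->|Hne]. lra.
  left. apply (Hinc_ _ _ H); lra.
Qed.

Lemma U_cont U U' (H : hyp U U') t : 1 <= t ->
  forall eps, 0 < eps -> exists d, 0 < d /\ forall s, 1 <= s -> Rabs (s - t) < d -> Rabs (U s - U t) < eps.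
Proof.
  intros Ht eps Heps.
  destruct (HC1_ _ _ H t Ht) as [Hd _].
  destruct (Hd 1 Rlt_0_1) as [d1 [Hd1 H1]].
  set (K := Rabs (U' t) + 1).
  assert (HK : 0 < K) by (unfold K; pose proof (Rabs_pos (U' t)); lra).
  exists (Rmin d1 (eps / K)). split.
  { apply Rmin_pos; auto. apply Rdiv_lt_0_compat; auto. }
  intros s Hs Hst.
  destruct (Req_dec s t) as [->|Hne].
  { rewrite Rminus_diag, Rabs_R0; auto. }
  assert (Hq := H1 s Hs Hne (Rlt_le_trans _ _ _ Hst (Rmin_l _ _))).
  set (q := (U s - U t) / (s - t)) in *.
  assert (E : U s - U t = q * (s - t)) by (unfold q; field; lra).
  rewrite E, Rabs_mult.
  assert (Hq2 : Rabs q < K).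
  { unfold K. pose proof (Rabs_triang_inv q (U' t)). lra. }
  assert (Hst2 : Rabs (s - t) < eps / K) by (eapply Rlt_le_trans; [exact Hst| apply Rmin_r]).
  apply Rle_lt_trans with (K * Rabs (s - t)).
  { apply Rmult_le_compat_r. apply Rabs_pos. lra. }
  apply Rlt_le_trans with (K * (eps / K)).
  { apply Rmult_lt_compat_l; auto. }
  right; field; lra.
Qed.

Lemma U'_nonneg U U' (H : hyp U U') t : 1 <= t -> 0 <= U' t.
Proof.
  intros Ht. destruct (Rle_lt_dec 0 (U' t)) as [|Hlt]; auto. exfalso.
  destruct (HC1_ _ _ H t Ht) as [Hd _].
  destruct (Hd (- U' t)) as [d [Hdp Hd2]]; [lra|].
  assert (Hq := Hd2 (t + d/2) ltac:(lra) ltac:(lra) ltac:(rewrite Rabs_right; lra)).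
  assert (Hu : U t < U (t + d/2)) by (apply (Hinc_ _ _ H); lra).
  assert (Hpq : 0 < (U (t + d/2) - U t) / (t + d/2 - t)) by (apply Rdiv_lt_0_compat; lra).
  revert Hq. split_Rabs; lra.
Qed.

Lemma phi_lt U U' (H : hyp U U') a b : 1 <= a -> a < b -> a * U a < b * U b.
Proof.
  intros Ha Hab. pose proof (Hinc_ _ _ H a b Ha Hab). pose proof (Hpos_ _ _ H a Ha).
  apply Rle_lt_trans with (a * U b). apply Rmult_le_compat_l; lra.
  apply Rmult_lt_compat_r; lra.
Qed.

Lemma phi_le U U' (H : hyp U U') a b : 1 <= a -> a <= b -> a * U a <= b * U b.
Proof.
  intros Ha Hab. destruct (Req_dec a b) as [->|]; [lra|]. left; apply (phi_lt _ _ H); lra.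
Qed.

Lemma phi_cont U U' (H : hyp U U') t : 1 <= t ->
  forall eps, 0 < eps -> exists d, 0 < d /\ forall s, 1 <= s -> Rabs (s - t) < d -> Rabs (s * U s - t * U t) < eps.
Proof.
  intros Ht. apply lim_to_eps.
  apply lim_mult. apply within_filter, locally_filter.
  - apply eps_to_lim. intros eps Heps. exists eps. split; auto.
  - apply eps_to_lim. apply (U_cont _ _ H t Ht).
Qed.

Lemma exists_x U U' (H : hyp U U') t : m_dom U t -> exists x, 1 <= x /\ x * U x = t.
Proof.
  intros [Ht1 [HUt HU1]].
  set (f := fun y => Rmax 1 y * U (Rmax 1 y)).
  assert (Hc : continuity f).
  { intros y eps Heps.
    assert (Hb : 1 <= Rmax 1 y) by apply Rmax_l.
    destruct (phi_cont _ _ H _ Hb eps Heps) as [d [Hd Hd2]].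
    exists d. split; auto. intros s [_ Hs]. unfold f, R_dist.
    apply Hd2. apply Rmax_l. eapply Rle_lt_trans. apply Rmax_lip. exact Hs. }
  assert (Hf1 : f 1 = U 1) by (unfold f; rewrite Rmax_left; lra).
  assert (Hft : f t = t * U t) by (unfold f; rewrite Rmax_right; lra).
  assert (Htt : t <= t * U t) by (rewrite <- (Rmult_1_r t) at 1; apply Rmult_le_compat_l; lra).
  destruct (IVT_gen f 1 t t Hc) as [z [Hz1 Hz2]].
  { rewrite Hf1, Hft. split.
    - apply Rle_trans with (U 1); auto. apply Rmin_l.
    - apply Rle_trans with (t * U t); auto. apply Rmax_r. }
  rewrite Rmin_left in Hz1 by lra.
  exists z. split. lra. unfold f in Hz2. rewrite Rmax_right in Hz2 by lra. exact Hz2.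
Qed.

Definition xof (U : R -> R) (t : R) : R := choose (fun x => 1 <= x /\ x * U x = t).

Lemma xof_spec U U' (H : hyp U U') t : m_dom U t -> 1 <= xof U t /\ xof U t * U (xof U t) = t.
Proof. intros Hd. apply (choose_spec (fun x => 1 <= x /\ x * U x = t)). apply (exists_x _ _ H _ Hd). Qed.

Lemma phi_inj U U' (H : hyp U U') a b : 1 <= a -> 1 <= b -> a * U a = b * U b -> a = b.
Proof.
  intros Ha Hb E. destruct (Rtotal_order a b) as [Hl|[Hl|Hl]]; auto.
  - pose proof (phi_lt _ _ H a b Ha Hl); lra.
  - pose proof (phi_lt _ _ H b a Hb Hl); lra.
Qed.

Lemma xof_U U U' (H : hyp U U') t : m_dom U t ->
  1 <= xof U t /\ 1 <= U (xof U t) /\ t / xof U t = U (xof U t).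
Proof.
  intros Hd. destruct (xof_spec _ _ H t Hd) as [Hx Hxe]. set (X := xof U t) in *.
  destruct Hd as [Ht1 [HUt HU1]].
  assert (HUX : 0 <= U X) by apply (Hpos_ _ _ H _ Hx).
  assert (E : t / X = U X) by (rewrite <- Hxe; field; lra).
  repeat split; auto.
  destruct (Rle_lt_dec 1 (U X)) as [|Hl]; auto. exfalso.
  assert (HXt : t < X).
  { destruct (Rle_lt_dec X t) as [Hle|]; auto.
    assert (X * U X < t * 1).
    { apply Rle_lt_trans with (t * U X). apply Rmult_le_compat_r; lra. apply Rmult_lt_compat_l; lra. }
    lra. }
  pose proof (Hinc_ _ _ H t X Ht1 HXt). lra.
Qed.

Lemma xof_lt U U' (H : hyp U U') s t : m_dom U s -> m_dom U t -> s < t -> xof U s < xof U t.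
Proof.
  intros Hs Ht Hst. destruct (xof_spec _ _ H s Hs) as [Hs1 Hs2]. destruct (xof_spec _ _ H t Ht) as [Ht1 Ht2].
  destruct (Rle_lt_dec (xof U t) (xof U s)) as [Hle|]; auto.
  pose proof (phi_le _ _ H _ _ Ht1 Hle). lra.
Qed.

Lemma ev_dom U U' (H : hyp U U') : exists M, forall t, M < t -> m_dom U t.
Proof.
  destruct (Hinf_ _ _ H (fun y => 1 < y)) as [M HM].
  { exists 1. auto. }
  exists (Rmax M (Rmax 1 (U 1))). intros t Ht.
  pose proof (Rmax_l M (Rmax 1 (U 1))). pose proof (Rmax_r M (Rmax 1 (U 1))).
  pose proof (Rmax_l 1 (U 1)). pose proof (Rmax_r 1 (U 1)).
  split; [lra|split; [apply HM; lra|lra]].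
Qed.

Lemma xof_infty U U' (H : hyp U U') : filterlim (xof U) (Rbar_locally p_infty) (Rbar_locally p_infty).
Proof.
  intros P [B HB]. destruct (ev_dom _ _ H) as [M HM].
  set (B' := Rmax 1 B).
  exists (Rmax M (B' * U B')). intros t Ht.
  pose proof (Rmax_l M (B' * U B')). pose proof (Rmax_r M (B' * U B')).
  assert (Hd : m_dom U t) by (apply HM; lra).
  destruct (xof_spec _ _ H t Hd) as [Hx Hxe].
  apply HB. unfold B' in *.
  destruct (Rle_lt_dec (xof U t) (Rmax 1 B)) as [Hle|Hlt].
  - pose proof (phi_le _ _ H _ _ Hx Hle). lra.
  - pose proof (Rmax_r 1 B). lra.
Qed.

Lemma xof_cont U U' (H : hyp U U') t : m_dom U t ->
  forall eps, 0 < eps -> exists d, 0 < d /\ forall s, m_dom U s -> Rabs (s - t) < d -> Rabs (xof U s - xof U t) < eps.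
Proof.
  intros Ht eps Heps.
  destruct (xof_spec _ _ H t Ht) as [Hx Hxe]. set (X := xof U t) in *.
  set (e := eps / 2).
  assert (He : 0 < e) by (unfold e; lra).
  assert (Hup : t < (X + e) * U (X + e)) by (rewrite <- Hxe; apply (phi_lt _ _ H); lra).
  destruct (Rle_lt_dec 1 (X - e)) as [Hlo|Hlo].
  - assert (Hdn : (X - e) * U (X - e) < t) by (rewrite <- Hxe; apply (phi_lt _ _ H); lra).
    exists (Rmin ((X + e) * U (X + e) - t) (t - (X - e) * U (X - e))).
    split. apply Rmin_pos; lra.
    intros s Hs Hst. pose proof (Rmin_l ((X + e) * U (X + e) - t) (t - (X - e) * U (X - e))).
    pose proof (Rmin_r ((X + e) * U (X + e) - t) (t - (X - e) * U (X - e))).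
    destruct (xof_spec _ _ H s Hs) as [Hsx Hsxe].
    assert (Hb : Rabs (s - t) < (X + e) * U (X + e) - t /\ Rabs (s - t) < t - (X - e) * U (X - e)) by lra.
    destruct (Rle_lt_dec (X + e) (xof U s)) as [Hle|Hlt].
    { pose proof (phi_le _ _ H (X + e) _ ltac:(lra) Hle). revert Hb; split_Rabs; lra. }
    destruct (Rle_lt_dec (xof U s) (X - e)) as [Hle2|Hlt2].
    { pose proof (phi_le _ _ H _ _ Hsx Hle2). revert Hb; split_Rabs; lra. }
    apply Rabs_def1; unfold e in *; lra.
  - exists ((X + e) * U (X + e) - t). split. lra.
    intros s Hs Hst.
    destruct (xof_spec _ _ H s Hs) as [Hsx Hsxe].
    destruct (Rle_lt_dec (X + e) (xof U s)) as [Hle|Hlt].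
    { pose proof (phi_le _ _ H (X + e) _ ltac:(lra) Hle). revert Hst; split_Rabs; lra. }
    apply Rabs_def1; unfold e in *; lra.
Qed.

Lemma ball_R x d y : ball x d y <-> Rabs (y - x) < d.
Proof. split; intro Hb; exact Hb. Qed.

Definition mder U U' t := U' (xof U t) * / (U (xof U t) + xof U t * U' (xof U t)).

Lemma m_deriv U U' (H : hyp U U') t : m_dom U t ->
  filterlim (fun s => (s / xof U s - t / xof U t) / (s - t))
    (within (fun s => m_dom U s /\ s <> t) (locally t)) (locally (mder U U' t)).
Proof.
  intros Ht. destruct (xof_U _ _ H t Ht) as [Hx [HUX EX]].
  destruct (xof_spec _ _ H t Ht) as [_ Hxe].
  set (X := xof U t) in *.
  set (G := within (fun s => m_dom U s /\ s <> t) (locally t)).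
  assert (FG : Filter G) by (apply within_filter, locally_filter).
  set (P := fun y => 1 <= y /\ y <> X).
  assert (H1 : filterlim (xof U) G (within P (locally X))).
  { intros Q [d HQ]. destruct (xof_cont _ _ H t Ht d (cond_pos d)) as [del [Hdel Hdel2]].
    exists (mkposreal del Hdel). intros s Hs [Hsd Hst].
    apply ball_R in Hs. simpl in Hs.
    destruct (xof_spec _ _ H s Hsd) as [Hsx Hsxe].
    apply HQ. apply ball_R. apply Hdel2; auto.
    split; auto. intro E. apply Hst. rewrite <- Hsxe, <- Hxe. unfold X in E; rewrite E. reflexivity. }
  assert (H2 : filterlim (fun y => (U y - U X) / (y - X)) (within P (locally X)) (locally (U' X))).
  { apply eps_to_lim. intros eps Heps.
    destruct (HC1_ _ _ H X Hx) as [Hd _]. destruct (Hd eps Heps) as [d [Hd1 Hd2]].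
    exists d. split; auto. intros s [Hs1 Hs2] Hs3. apply Hd2; auto. }
  assert (H3 : filterlim U (within P (locally X)) (locally (U X))).
  { apply eps_to_lim. intros eps Heps.
    destruct (U_cont _ _ H X Hx eps Heps) as [d [Hd1 Hd2]].
    exists d. split; auto. intros s [Hs1 Hs2] Hs3. apply Hd2; auto. }
  assert (FP : Filter (within P (locally X))) by (apply within_filter, locally_filter).
  assert (H4 : filterlim (fun y => (y * U y - X * U X) / (y - X)) (within P (locally X))
                 (locally (U X + X * U' X))).
  { apply filterlim_within_ext with (f := fun y => U y + X * ((U y - U X) / (y - X))).
    { intros y [Hy1 Hy2]. field. lra. }
    apply lim_plus; auto. apply lim_mult; auto. apply filterlim_const. }
  pose proof (U'_nonneg _ _ H X Hx) as HU'.
  assert (Hpos : 0 < U X + X * U' X).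
  { assert (0 <= X * U' X) by (apply Rmult_le_pos; lra). lra. }
  assert (H5 : filterlim (fun s => (xof U s - X) / (s - t)) G (locally (/ (U X + X * U' X)))).
  { apply filterlim_within_ext with (f := fun s => / ((xof U s * U (xof U s) - X * U X) / (xof U s - X))).
    { intros s [Hsd Hst]. destruct (xof_spec _ _ H s Hsd) as [Hsx Hsxe].
      rewrite Hsxe, Hxe.
      assert (xof U s <> X).
      { intro E. apply Hst. rewrite <- Hsxe, <- Hxe, E. reflexivity. }
      field. split; lra. }
    apply lim_inv; auto. lra.
    apply (filterlim_comp _ _ _ (xof U) (fun y => (y * U y - X * U X) / (y - X)) G _ _ H1 H4). }
  unfold mder. fold X.
  apply filterlim_within_ext with (f := fun s => ((U (xof U s) - U X) / (xof U s - X)) * ((xof U s - X) / (s - t))).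
  { intros s [Hsd Hst]. destruct (xof_U _ _ H s Hsd) as [Hsx [_ Es]].
    destruct (xof_spec _ _ H s Hsd) as [_ Hsxe].
    rewrite Es, EX.
    assert (xof U s <> X).
    { intro E. apply Hst. rewrite <- Hsxe, <- Hxe, E. reflexivity. }
    field. split; lra. }
  apply lim_mult; auto.
  apply (filterlim_comp _ _ _ (xof U) (fun y => (U y - U X) / (y - X)) G _ _ H1 H2).
Qed.

Lemma mder_cont U U' (H : hyp U U') t : m_dom U t ->
  filterlim (mder U U') (within (m_dom U) (locally t)) (locally (mder U U' t)).
Proof.
  intros Ht. destruct (xof_U _ _ H t Ht) as [Hx [HUX EX]].
  set (X := xof U t) in *.
  set (G := within (m_dom U) (locally t)).
  assert (FG : Filter G) by (apply within_filter, locally_filter).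
  set (P := fun y => 1 <= y).
  assert (FP : Filter (within P (locally X))) by (apply within_filter, locally_filter).
  assert (H1 : filterlim (xof U) G (within P (locally X))).
  { intros Q [d HQ]. destruct (xof_cont _ _ H t Ht d (cond_pos d)) as [del [Hdel Hdel2]].
    exists (mkposreal del Hdel). intros s Hs Hsd.
    apply ball_R in Hs. simpl in Hs.
    destruct (xof_spec _ _ H s Hsd) as [Hsx Hsxe].
    apply HQ. apply ball_R. apply Hdel2; auto. auto. }
  assert (H2 : filterlim U' (within P (locally X)) (locally (U' X))).
  { apply eps_to_lim. intros eps Heps.
    destruct (HC1_ _ _ H X Hx) as [_ Hd]. destruct (Hd eps Heps) as [d [Hd1 Hd2]].
    exists d. split; auto. }
  assert (H3 : filterlim U (within P (locally X)) (locally (U X))).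
  { apply eps_to_lim. apply (U_cont _ _ H X Hx). }
  assert (H4 : filterlim (fun y : R => y) (within P (locally X)) (locally X)).
  { apply eps_to_lim. intros eps Heps. exists eps; split; auto. }
  pose proof (U'_nonneg _ _ H X Hx) as HU'.
  assert (Hpos : 0 < U X + X * U' X).
  { assert (0 <= X * U' X) by (apply Rmult_le_pos; lra). lra. }
  unfold mder. fold X.
  apply (filterlim_comp _ _ _ (xof U) (fun y => U' y * / (U y + y * U' y)) G _ _ H1).
  apply lim_mult; auto. apply lim_inv; auto. lra.
  apply lim_plus; auto. apply lim_mult; auto.
Qed.

Lemma Rpower_base1 z : Rpower 1 z = 1.
Proof. unfold Rpower. rewrite ln_1, Rmult_0_r, exp_0. reflexivity. Qed.

Lemma Rpower_pos x z : 0 < Rpower x z.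
Proof. unfold Rpower. apply exp_pos. Qed.

Lemma Rpower_inv_id a g : 0 < a -> 0 <= g -> Rpower (Rpower a (1 / (1 + g))) (1 + g) = a.
Proof.
  intros Ha Hg. rewrite Rpower_mult.
  replace (1 / (1 + g) * (1 + g)) with 1 by (field; lra). apply Rpower_1; auto.
Qed.

Lemma Rpower_succ d g : 0 < d -> Rpower d g * d = Rpower d (1 + g).
Proof. intros Hd. rewrite Rplus_comm, Rpower_plus, Rpower_1; auto. Qed.

Lemma loc_gt l b : b < l -> locally l (fun y => b < y).
Proof.
  intros H. exists (mkposreal (l - b) ltac:(lra)). intros y Hy. change (Rabs (y - l) < l - b) in Hy.
  destruct (Rabs_def2 _ _ Hy); lra.
Qed.

Lemma loc_lt l b : l < b -> locally l (fun y => y < b).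
Proof.
  intros H. exists (mkposreal (b - l) ltac:(lra)). intros y Hy. change (Rabs (y - l) < b - l) in Hy.
  destruct (Rabs_def2 _ _ Hy); lra.
Qed.

Lemma U_ratio_lim U U' g (H : hyp U U') (Hrv : reg_var U g) d : 0 < d ->
  filterlim (fun t => U (xof U t * d) / U (xof U t)) (Rbar_locally p_infty) (locally (Rpower d g)).
Proof.
  intros Hd.
  apply (filterlim_comp _ _ _ (xof U) (fun t => U (t * d) / U t) _ _ _ (xof_infty _ _ H) (Hrv d Hd)).
Qed.

Lemma r_lim U U' g (H : hyp U U') (Hg : 0 <= g) (Hrv : reg_var U g) a : 0 < a ->
  filterlim (fun t => xof U (t * a) / xof U t) (Rbar_locally p_infty) (locally (Rpower a (1 / (1 + g)))).
Proof.
  intros Ha. set (c := Rpower a (1 / (1 + g))).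
  assert (Hc : 0 < c) by apply Rpower_pos.
  assert (Hca : Rpower c (1 + g) = a) by apply (Rpower_inv_id a g Ha Hg).
  intros P [eps HP].
  set (del := Rmin (1/2) (eps / (2 * c))).
  assert (Hdel : 0 < del) by (apply Rmin_pos; [lra| apply Rdiv_lt_0_compat; pose proof (cond_pos eps); lra]).
  assert (Hdel1 : del <= 1/2) by apply Rmin_l.
  assert (Hdel2 : c * del <= eps / 2).
  { assert (del <= eps / (2 * c)) by apply Rmin_r.
    apply Rle_trans with (c * (eps / (2 * c))). apply Rmult_le_compat_l; lra. right; field; lra. }
  set (du := c * (1 + del)). set (dl := c * (1 - del)).
  assert (Hdu : 0 < du) by (unfold du; apply Rmult_lt_0_compat; lra).
  assert (Hdl : 0 < dl) by (unfold dl; apply Rmult_lt_0_compat; lra).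
  assert (Kup : a / du < Rpower du g).
  { assert (a < Rpower du g * du).
    { rewrite Rpower_succ; auto. unfold du. rewrite <- Rpower_mult_distr by lra. rewrite Hca.
      assert (Rpower 1 (1 + g) < Rpower (1 + del) (1 + g)) by (apply Rlt_Rpower_l; lra).
      rewrite Rpower_base1 in H0.
      nra. }
    apply Rmult_lt_reg_r with du; auto. unfold Rdiv. rewrite Rmult_assoc, Rinv_l, Rmult_1_r; lra. }
  assert (Klo : Rpower dl g < a / dl).
  { assert (Rpower dl g * dl < a).
    { rewrite Rpower_succ; auto. unfold dl. rewrite <- Rpower_mult_distr by lra. rewrite Hca.
      assert (Rpower (1 - del) (1 + g) < Rpower 1 (1 + g)) by (apply Rlt_Rpower_l; lra).
      rewrite Rpower_base1 in H0.
      nra. }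
    apply Rmult_lt_reg_r with dl; auto. unfold Rdiv. rewrite Rmult_assoc, Rinv_l, Rmult_1_r; lra. }
  destruct (U_ratio_lim _ _ _ H Hrv du Hdu _ (loc_gt _ _ Kup)) as [M2 HM2].
  destruct (U_ratio_lim _ _ _ H Hrv dl Hdl _ (loc_lt _ _ Klo)) as [M3 HM3].
  destruct (xof_infty _ _ H (fun y => / dl < y) (ex_intro _ (/ dl) (fun x Hx => Hx))) as [M4 HM4].
  destruct (ev_dom _ _ H) as [M1 HM1].
  exists (Rmax (Rmax 1 (M1 / a)) (Rmax M1 (Rmax M2 (Rmax M3 M4)))).
  intros t Ht.
  pose proof (Rmax_l (Rmax 1 (M1 / a)) (Rmax M1 (Rmax M2 (Rmax M3 M4)))) as T1.
  pose proof (Rmax_r (Rmax 1 (M1 / a)) (Rmax M1 (Rmax M2 (Rmax M3 M4)))) as T2.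
  pose proof (Rmax_l 1 (M1 / a)). pose proof (Rmax_r 1 (M1 / a)).
  pose proof (Rmax_l M1 (Rmax M2 (Rmax M3 M4))). pose proof (Rmax_r M1 (Rmax M2 (Rmax M3 M4))).
  pose proof (Rmax_l M2 (Rmax M3 M4)). pose proof (Rmax_r M2 (Rmax M3 M4)).
  pose proof (Rmax_l M3 M4). pose proof (Rmax_r M3 M4).
  assert (Dt : m_dom U t) by (apply HM1; lra).
  assert (Dta : m_dom U (t * a)).
  { apply HM1. assert (M1 / a < t) as T by lra.
    apply Rmult_lt_compat_r with (r := a) in T; auto. unfold Rdiv in T.
    rewrite Rmult_assoc, Rinv_l, Rmult_1_r in T; lra. }
  assert (E2 := HM2 t ltac:(lra)). assert (E3 := HM3 t ltac:(lra)). assert (E4 := HM4 t ltac:(lra)).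
  simpl in E2, E3, E4.
  destruct (xof_U _ _ H t Dt) as [Hx [HUX _]].
  destruct (xof_U _ _ H (t * a) Dta) as [Hy [HUY _]].
  destruct (xof_spec _ _ H t Dt) as [_ Ex].
  destruct (xof_spec _ _ H (t * a) Dta) as [_ Ey].
  set (X := xof U t) in *. set (Y := xof U (t * a)) in *.
  set (r := Y / X).
  assert (HY : Y = r * X) by (unfold r; field; lra).
  assert (Hr : 0 < r) by (unfold r; apply Rdiv_lt_0_compat; lra).
  assert (Key : r * U Y = a * U X).
  { assert (X * (r * U Y) = X * (a * U X)).
    { rewrite <- Ex in Ey. replace (X * (r * U Y)) with (Y * U Y) by (rewrite HY; ring). rewrite Ey. ring. }
    apply Rmult_eq_reg_l with X; lra. }
  assert (HXdl : 1 <= X * dl).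
  { apply Rmult_lt_compat_r with (r := dl) in E4; auto. rewrite Rinv_l in E4; lra. }
  assert (HXdu : X * dl <= X * du) by (unfold du, dl; apply Rmult_le_compat_l; nra).
  assert (Rup : r < du).
  { destruct (Rle_lt_dec du r) as [Hle|]; auto. exfalso.
    assert (U (X * du) <= U Y) by (apply (U_le _ _ H); [lra| rewrite HY; nra]).
    assert (Z1 : a / du * U X < U (X * du)).
    { apply Rmult_lt_compat_r with (r := U X) in E2; [|lra].
      unfold Rdiv in E2 at 2. rewrite Rmult_assoc, Rinv_l, Rmult_1_r in E2; lra. }
    assert (a * U X < du * U (X * du)).
    { apply Rmult_lt_compat_l with (r := du) in Z1; auto.
      replace (du * (a / du * U X)) with (a * U X) in Z1 by (field; lra). exact Z1. }
    nra. }
  assert (Rlo : dl < r).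
  { destruct (Rle_lt_dec r dl) as [Hle|]; auto. exfalso.
    assert (U Y <= U (X * dl)) by (apply (U_le _ _ H); [lra| rewrite HY; nra]).
    assert (Z1 : U (X * dl) < a / dl * U X).
    { apply Rmult_lt_compat_r with (r := U X) in E3; [|lra].
      unfold Rdiv in E3 at 1. rewrite Rmult_assoc, Rinv_l, Rmult_1_r in E3; lra. }
    assert (dl * U (X * dl) < a * U X).
    { apply Rmult_lt_compat_l with (r := dl) in Z1; auto.
      replace (dl * (a / dl * U X)) with (a * U X) in Z1 by (field; lra). exact Z1. }
    assert (0 <= U Y) by lra.
    nra. }
  apply HP. apply ball_R. unfold du, dl in *. fold r. apply Rabs_def1; pose proof (cond_pos eps); nra.
Qed.

Lemma ev_dom2 U U' (H : hyp U U') a : 0 < a -> exists M, forall t, M < t -> 0 < t /\ m_dom U t /\ m_dom U (t * a).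
Proof.
  intros Ha. destruct (ev_dom _ _ H) as [M1 HM1].
  exists (Rmax (Rmax 1 (M1 / a)) M1). intros t Ht.
  pose proof (Rmax_l (Rmax 1 (M1 / a)) M1). pose proof (Rmax_r (Rmax 1 (M1 / a)) M1).
  pose proof (Rmax_l 1 (M1 / a)). pose proof (Rmax_r 1 (M1 / a)).
  split; [lra|split; [apply HM1; lra|]].
  apply HM1. assert (M1 / a < t) as T by lra.
  apply Rmult_lt_compat_r with (r := a) in T; auto. unfold Rdiv in T.
  rewrite Rmult_assoc, Rinv_l, Rmult_1_r in T; lra.
Qed.

Lemma exp_div3 a b c : exp a / (exp b * exp c) = exp (a - b - c).
Proof.
  unfold Rminus. rewrite !exp_plus, !exp_Ropp. field.
  split; apply Rgt_not_eq, exp_pos.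
Qed.

Lemma alg_id (X LX Ls g t : R) : 0 < X -> 0 < LX -> 0 < Ls -> 0 <= g ->
  t = X * (Rpower X g * LX) ->
  t / X / (Rpower t (g / (g + 1)) * Rpower Ls (- (1 / (1 + g)))) = Rpower (LX * Ls) (1 / (1 + g)).
Proof.
  intros HX HL HLs Hg Ht.
  assert (EX : X = exp (ln X)) by (rewrite exp_ln; auto).
  assert (EL : LX = exp (ln LX)) by (rewrite exp_ln; auto).
  assert (ES : Ls = exp (ln Ls)) by (rewrite exp_ln; auto).
  assert (Et : t = exp ((1 + g) * ln X + ln LX)).
  { rewrite Ht. unfold Rpower. rewrite EX at 1. rewrite EL at 1. rewrite <- !exp_plus. f_equal. ring. }
  assert (Em : t / X = exp (g * ln X + ln LX)).
  { rewrite Et. rewrite EX at 2. unfold Rdiv. rewrite <- exp_Ropp, <- exp_plus. f_equal. ring. }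
  rewrite Em. unfold Rpower. rewrite Et, ln_exp, ln_mult by auto. rewrite exp_div3. f_equal. field. lra.
Qed.

Lemma Rpower_cont1 k : filterlim (fun y => Rpower y k) (locally 1) (locally 1).
Proof.
  assert (C : continuity_pt (fun y => Rpower y k) 1).
  { apply derivable_continuous_pt. exists (k * Rpower 1 (k - 1)). apply derivable_pt_lim_power. lra. }
  apply continuity_pt_filterlim in C. rewrite Rpower_base1 in C. exact C.
Qed.

Theorem lemma1 (U U' : R -> R) (gamma : R)
  (Hgamma : 0 <= gamma)
  (Hpos : forall t, 1 <= t -> 0 <= U t)
  (Hinc : forall s t, 1 <= s -> s < t -> U s < U t)
  (Hinf : is_lim U p_infty p_infty)
  (HC1 : C1_on (fun t => 1 <= t) U U')
  (Hrv : reg_var U gamma) :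
  exists m : R -> R,
    (* (i) well-defined *)
    (forall t, m_dom U t ->
       1 <= m t /\ 1 <= t / m t /\ U (t / m t) = m t /\
       (forall y, 1 <= y -> 1 <= t / y -> U (t / y) = y -> y = m t)) /\
    (* (i) increasing *)
    (forall s t, m_dom U s -> m_dom U t -> s < t -> m s < m t) /\
    (* (ii) continuously differentiable *)
    (exists m' : R -> R, C1_on (m_dom U) m m') /\
    (* (iii) *)
    is_lim m p_infty p_infty /\
    is_lim (fun t => t / m t) p_infty p_infty /\
    (* (iv) *)
    reg_var m (gamma / (gamma + 1)) /\
    (forall L L1s : R -> R,
       (forall t, 1 <= t -> U t = Rpower t gamma * L t) ->
       slow_var L ->
       debruijn_conj (fun t => L (Rpower t (1 / (1 + gamma)))) L1s ->
       is_lim (fun t => m t / (Rpower t (gamma / (gamma + 1))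
                               * Rpower (L1s t) (- (1 / (1 + gamma)))))
              p_infty (Finite 1)).
Proof.
  assert (H : hyp U U') by (constructor; auto).
  exists (fun t => t / xof U t).
  split.
  { intros t Ht. destruct (xof_U _ _ H t Ht) as [Hx [HUX EX]].
    destruct (xof_spec _ _ H t Ht) as [_ Hxe].
    assert (Ht1 : 1 <= t) by apply Ht.
    assert (E2 : t / (t / xof U t) = xof U t) by (field; lra).
    rewrite E2, EX. repeat split; auto.
    intros y Hy1 Hy2 Hy3.
    assert (E : t / y = xof U t).
    { apply (phi_inj _ _ H); auto. rewrite Hy3, Hxe. field. lra. }
    rewrite <- EX, <- E. field. split; lra. }
  split.
  { intros s t Hs Ht Hst. destruct (xof_U _ _ H s Hs) as [Hsx [_ Es]].
    destruct (xof_U _ _ H t Ht) as [_ [_ Et]]. rewrite Es, Et.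
    apply (Hinc_ _ _ H); auto. apply (xof_lt _ _ H); auto. }
  split.
  { exists (mder U U'). intros t Ht. split.
    - intros eps Heps.
      destruct (lim_to_eps _ _ _ _ (m_deriv _ _ H t Ht) eps Heps) as [d [Hd H2]].
      exists d. split; [exact Hd|]. intros s Hs Hne Hst. apply H2; auto.
    - apply lim_to_eps. apply (mder_cont _ _ H t Ht). }
  destruct (ev_dom _ _ H) as [M HM].
  split.
  { apply (filterlim_ext_loc (fun t => U (xof U t))).
    { exists M. intros t Ht. destruct (xof_U _ _ H t (HM t Ht)) as [_ [_ E]]. auto. }
    apply (filterlim_comp _ _ _ (xof U) U _ _ _ (xof_infty _ _ H) Hinf). }
  split.
  { apply (filterlim_ext_loc (xof U)).
    { exists M. intros t Ht. destruct (xof_U _ _ H t (HM t Ht)) as [Hx _].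
      assert (1 <= t) by apply (HM t Ht). field. lra. }
    exact (xof_infty _ _ H). }
  split.
  { intros a Ha.
    destruct (ev_dom2 _ _ H a Ha) as [M2 HM2].
    apply (filterlim_ext_loc (fun t => a / (xof U (t * a) / xof U t))).
    { exists M2. intros t Ht. destruct (HM2 t Ht) as [Ht0 [D1 D2]].
      destruct (xof_U _ _ H t D1) as [Hx _]. destruct (xof_U _ _ H _ D2) as [Hy _].
      field. repeat split; lra. }
    assert (Hc : 0 < Rpower a (1 / (1 + gamma))) by apply Rpower_pos.
    replace (Rpower a (gamma / (gamma + 1))) with (a / Rpower a (1 / (1 + gamma))).
    2: { replace (gamma / (gamma + 1)) with (1 + - (1 / (1 + gamma))) by (field; lra).
         rewrite Rpower_plus, Rpower_Ropp, Rpower_1 by auto. reflexivity. }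
    apply lim_div. apply Rbar_locally'_filter. lra. apply filterlim_const.
    apply (r_lim _ _ _ H Hgamma Hrv a Ha). }
  intros L L1s HUL _ [Hpos1 [_ [_ Hdb]]].
  set (k := 1 / (1 + gamma)).
  set (s := fun t => Rpower (xof U t) (1 + gamma)).
  assert (Hs : filterlim s (Rbar_locally p_infty) (Rbar_locally p_infty)).
  { apply (filterlim_comp _ _ _ (xof U) (fun y => Rpower y (1 + gamma)) _ _ _ (xof_infty _ _ H)).
    intros P [B HB]. exists (Rmax 1 B). intros y Hy.
    pose proof (Rmax_l 1 B). pose proof (Rmax_r 1 B). apply HB.
    assert (Rpower 1 gamma <= Rpower y gamma) by (apply Rle_Rpower_l; lra).
    rewrite Rpower_base1 in H2. rewrite <- Rpower_succ by lra. nra. }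
  pose proof (filterlim_comp _ _ _ s _ _ _ _ Hs Hdb) as Hq. simpl in Hq.
  pose proof (filterlim_comp _ _ _ _ (fun y => Rpower y k) _ _ _ Hq (Rpower_cont1 k)) as Hq2.
  eapply filterlim_ext_loc; [|exact Hq2].
  exists M. intros t Ht. pose proof (HM t Ht) as Dt.
  destruct (xof_U _ _ H t Dt) as [Hx [HUX EX]]. destruct (xof_spec _ _ H t Dt) as [_ Hxe].
  set (X := xof U t) in *.
  assert (HsX : Rpower (s t) (1 / (1 + gamma)) = X).
  { unfold s. fold X. rewrite Rpower_mult. replace ((1 + gamma) * (1 / (1 + gamma))) with 1 by (field; lra).
    apply Rpower_1; lra. }
  simpl. rewrite HsX.
  assert (HU := HUL X Hx).
  assert (HpX : 0 < Rpower X gamma) by apply Rpower_pos.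
  assert (HLX : 0 < L X) by nra.
  assert (Hst : s t * L X = t).
  { unfold s. fold X. rewrite <- Rpower_succ by lra. rewrite <- Hxe, HU. ring. }
  rewrite Hst. fold k. unfold k.
  symmetry. apply alg_id; try lra.
  apply Hpos1. destruct Dt; lra.
  rewrite <- HU. lra.
Qed.
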